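(* Let $\Gamma$ be the graph with exactly two vertices $s$ and $t$, which are not adjacent, and let $G=G(C_\Gamma)$. If $a\in A_5(s)$ is an involution, then its centralizer $Z_G(a)$ is contained in $S_5(s)$.
   Context: For a graph $\Gamma$ with vertex set $S$, $G(C_\Gamma)$ is the group with generators $s_1,s_2,s_3,s_4$ for each $s\in S$ and exactly the following relations: every generator is an involution; for each $s\in S$, $(s_is_{i+1})^3=e$ for $i=1,2,3$ and $(s_is_j)^2=e$ for $|i-j|\ge2$; for all distinct $s,t\in S$, $(s_4t_4)^2=e$; for all distinct adjacent $s,t\in S$, $(s_1t_1)^2=(s_1t_3)^2=(s_3t_1)^2=(s_3t_3)^2=e$. Thus here $G$ is generated by $s_1,\dots,s_4,t_1,\dots,t_4$ with the relations among the $s_i$, among the $t_i$, and $(s_4t_4)^2=e$ only. $S_5(s)=\langle s_1,s_2,s_3,s_4\rangle\cong S_5$ and $A_5(s)$ is its index-$2$ subgroup ($\cong A_5$). $Z_G(a)=\{g\in G: ga=ag\}$. *)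

(* Defs.v *)
(* The group G = G(C_Gamma) for Gamma = two non-adjacent
   vertices s, t is given by its presentation: elements are words in the
   eight generators s_1..s_4, t_1..t_4 modulo the congruence generated by
   the defining relators (every generator is an involution, so the monoid
   quotient is a group, inverse = reversed word, product = concatenation). *)
From mathcomp Require Import all_boot.
Set Implicit Arguments. Unset Strict Implicit. Unset Printing Implicit Defensive.

(* A generator: (true, i) is s_{i+1}, (false, i) is t_{i+1}. *)
Definition letter := (bool * 'I_4)%type.
Definition word := seq letter.

Definition idx3 : 'I_4 := @Ordinal 4 3 erefl.

Inductive relator : word -> Prop :=
| rel_inv (x : letter) : relator [:: x; x]
| rel_braid (b : bool) (i j : 'I_4) :
    nat_of_ord j = (nat_of_ord i).+1 ->
    relator (flatten (nseq 3 [:: (b, i); (b, j)]))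
| rel_comm (b : bool) (i j : 'I_4) :
    ((i.+2 <= j) || (j.+2 <= i))%N ->
    relator [:: (b, i); (b, j); (b, i); (b, j)]
| rel_s4t4 : relator [:: (true, idx3); (false, idx3); (true, idx3); (false, idx3)].

Inductive weq : word -> word -> Prop :=
| weq_refl w : weq w w
| weq_sym u v : weq u v -> weq v u
| weq_trans u v w : weq u v -> weq v w -> weq u w
| weq_rel (u r v : word) : relator r -> weq (u ++ r ++ v) (u ++ v).

Definition s_word (w : word) : bool := all (fun x : letter => x.1) w.

Definition in_S5s (g : word) : Prop := exists w, s_word w /\ weq g w.

(* g lies in A_5(s): the index-2 (even-length) subgroup of S_5(s). *)
Definition in_A5s (g : word) : Prop :=
  exists w, s_word w /\ ~~ odd (size w) /\ weq g w.

Definition in_centralizer (a g : word) : Prop := weq (g ++ a) (a ++ g).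

Definition involution (a : word) : Prop := weq (a ++ a) [::] /\ ~ weq a [::].

(* Main.v *)
Require Import Defs.
From mathcomp Require Import all_boot.
From Stdlib Require Import Setoid Morphisms.
Set Implicit Arguments. Unset Strict Implicit. Unset Printing Implicit Defensive.

Lemma weq_del u r v : relator r -> weq (u ++ r ++ v) (u ++ v).
Proof. exact: weq_rel. Qed.
Lemma weq_ins u r v : relator r -> weq (u ++ v) (u ++ r ++ v).
Proof. by move=> h; apply: weq_sym; apply: weq_rel. Qed.

Lemma weq_catl l u v : weq u v -> weq (l ++ u) (l ++ v).
Proof.
elim=> {u v} [w|u v _ IH|u v w _ IH1 _ IH2|u r v hr].
- exact: weq_refl.
- exact: weq_sym.
- exact: weq_trans IH2.
- by rewrite !catA -(catA (l ++ u)); apply: weq_rel.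
Qed.
Lemma weq_catr l u v : weq u v -> weq (u ++ l) (v ++ l).
Proof.
elim=> {u v} [w|u v _ IH|u v w _ IH1 _ IH2|u r v hr].
- exact: weq_refl.
- exact: weq_sym.
- exact: weq_trans IH2.
- by rewrite -!catA; apply: weq_rel.
Qed.
Lemma weq_cat u u' v v' : weq u u' -> weq v v' -> weq (u ++ v) (u' ++ v').
Proof. move=> h1 h2; apply: weq_trans (weq_catl _ h2); exact: weq_catr. Qed.
Lemma weq_cons x u v : weq u v -> weq (x :: u) (x :: v).
Proof. exact: (weq_catl [:: x]). Qed.

Lemma weq_cancel x w : weq (x :: x :: w) w.
Proof. have := @weq_del [::] [:: x; x] w (rel_inv x). by []. Qed.

Lemma weq_comm b (i j : 'I_4) : ((i.+2 <= j) || (j.+2 <= i))%N ->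
  weq [:: (b, i); (b, j)] [:: (b, j); (b, i)].
Proof.
move=> h.
have h' : ((j.+2 <= i) || (i.+2 <= j))%N by rewrite orbC.
(* [y;x] ~ [y;y;x;y;x;x] ~ [y;y;x;y] ~ [x;y] *)
apply: weq_sym.
apply: (@weq_trans _ [:: (b,j); (b,j); (b,i); (b,j); (b,i); (b,i)]).
  have := @weq_ins [:: (b,j)] [:: (b, j); (b, i); (b, j); (b, i)] [:: (b,i)] (rel_comm b h').
  by [].
apply: (@weq_trans _ [:: (b,j); (b,j); (b,i); (b,j)]).
  have := @weq_del [:: (b,j); (b,j); (b,i); (b,j)] [:: (b,i); (b,i)] [::] (rel_inv _).
  by rewrite cats0.
exact: weq_cancel.
Qed.

Lemma weq_braid b (i j : 'I_4) : nat_of_ord j = (nat_of_ord i).+1 ->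
  weq [:: (b, i); (b, j); (b, i)] [:: (b, j); (b, i); (b, j)].
Proof.
move=> h.
set x := (b, i); set y := (b, j).
apply: (@weq_trans _ ([:: x; y; x; y; x; y] ++ [:: y; x; y])).
  apply: (@weq_trans _ [:: x; y; x; y; y]).
    have := @weq_ins [:: x; y; x] [:: y; y] [::] (rel_inv y). by rewrite cats0.
  apply: (@weq_trans _ [:: x; y; x; y; x; x; y]).
    have := @weq_ins [:: x; y; x; y] [:: x; x] [:: y] (rel_inv x). by [].
  have := @weq_ins [:: x; y; x; y; x] [:: y; y] [:: x; y] (rel_inv y). by [].
have := @weq_del [::] [:: x; y; x; y; x; y] [:: y; x; y] (rel_braid b h). by [].
Qed.

Lemma weq_s4t4 : weq [:: (false, idx3); (true, idx3)] [:: (true, idx3); (false, idx3)].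
Proof.
set x := (true, idx3); set y := (false, idx3).
apply: (@weq_trans _ [:: x; y; x; y; y; x]).
  have := @weq_ins [::] [:: x; y; x; y] [:: y; x] rel_s4t4. by [].
apply: (@weq_trans _ [:: x; y; x; x]).
  have := @weq_del [:: x; y; x] [:: y; y] [:: x] (rel_inv y). by [].
have := @weq_del [:: x; y] [:: x; x] [::] (rel_inv x). by rewrite cats0.
Qed.

Definition pm := seq nat.
Definition one : pm := [:: 0; 1; 2; 3; 4].
Definition mul (p q : pm) : pm := [seq nth 0 q (nth 0 p k) | k <- iota 0 5].
Arguments mul : simpl never.
Definition gen (n : nat) : pm :=
  match n with
  | 0 => [:: 1; 0; 2; 3; 4]
  | 1 => [:: 0; 2; 1; 3; 4]
  | 2 => [:: 0; 1; 3; 2; 4]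
  | _ => [:: 0; 1; 2; 4; 3]
  end.
Definition g4 : pm := gen 3.
Definition elems : seq pm := [::
  [::0;1;2;3;4];
  [::1;0;2;3;4];
  [::0;2;1;3;4];
  [::0;1;3;2;4];
  [::0;1;2;4;3];
  [::1;2;0;3;4];
  [::1;0;3;2;4];
  [::1;0;2;4;3];
  [::2;0;1;3;4];
  [::0;2;3;1;4];
  [::0;2;1;4;3];
  [::0;3;1;2;4];
  [::0;1;3;4;2];
  [::0;1;4;2;3];
  [::2;1;0;3;4];
  [::1;2;3;0;4];
  [::1;2;0;4;3];
  [::1;3;0;2;4];
  [::1;0;3;4;2];
  [::1;0;4;2;3];
  [::2;0;3;1;4];
  [::2;0;1;4;3];
  [::0;3;2;1;4];
  [::0;2;3;4;1];
  [::0;2;4;1;3];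
  [::3;0;1;2;4];
  [::0;3;1;4;2];
  [::0;1;4;3;2];
  [::0;4;1;2;3];
  [::2;1;3;0;4];
  [::2;1;0;4;3];
  [::1;3;2;0;4];
  [::1;2;3;4;0];
  [::1;2;4;0;3];
  [::3;1;0;2;4];
  [::1;3;0;4;2];
  [::1;0;4;3;2];
  [::1;4;0;2;3];
  [::2;3;0;1;4];
  [::2;0;3;4;1];
  [::2;0;4;1;3];
  [::3;0;2;1;4];
  [::0;3;2;4;1];
  [::0;2;4;3;1];
  [::0;4;2;1;3];
  [::3;0;1;4;2];
  [::0;3;4;1;2];
  [::0;4;1;3;2];
  [::4;0;1;2;3];
  [::2;3;1;0;4];
  [::2;1;3;4;0];
  [::2;1;4;0;3];
  [::3;1;2;0;4];
  [::1;3;2;4;0];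
  [::1;2;4;3;0];
  [::1;4;2;0;3];
  [::3;1;0;4;2];
  [::1;3;4;0;2];
  [::1;4;0;3;2];
  [::4;1;0;2;3];
  [::3;2;0;1;4];
  [::2;3;0;4;1];
  [::2;0;4;3;1];
  [::2;4;0;1;3];
  [::3;0;2;4;1];
  [::0;3;4;2;1];
  [::0;4;2;3;1];
  [::4;0;2;1;3];
  [::3;0;4;1;2];
  [::0;4;3;1;2];
  [::4;0;1;3;2];
  [::3;2;1;0;4];
  [::2;3;1;4;0];
  [::2;1;4;3;0];
  [::2;4;1;0;3];
  [::3;1;2;4;0];
  [::1;3;4;2;0];
  [::1;4;2;3;0];
  [::4;1;2;0;3];
  [::3;1;4;0;2];
  [::1;4;3;0;2];
  [::4;1;0;3;2];
  [::3;2;0;4;1];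
  [::2;3;4;0;1];
  [::2;4;0;3;1];
  [::4;2;0;1;3];
  [::3;0;4;2;1];
  [::0;4;3;2;1];
  [::4;0;2;3;1];
  [::3;4;0;1;2];
  [::4;0;3;1;2];
  [::3;2;1;4;0];
  [::2;3;4;1;0];
  [::2;4;1;3;0];
  [::4;2;1;0;3];
  [::3;1;4;2;0];
  [::1;4;3;2;0];
  [::4;1;2;3;0];
  [::3;4;1;0;2];
  [::4;1;3;0;2];
  [::3;2;4;0;1];
  [::2;4;3;0;1];
  [::4;2;0;3;1];
  [::3;4;0;2;1];
  [::4;0;3;2;1];
  [::4;3;0;1;2];
  [::3;2;4;1;0];
  [::2;4;3;1;0];
  [::4;2;1;3;0];
  [::3;4;1;2;0];
  [::4;1;3;2;0];
  [::4;3;1;0;2];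
  [::3;4;2;0;1];
  [::4;2;3;0;1];
  [::4;3;0;2;1];
  [::3;4;2;1;0];
  [::4;2;3;1;0];
  [::4;3;1;2;0];
  [::4;3;2;0;1];
  [::4;3;2;1;0]].

Definition lt5 (p : pm) := all (fun k => k < 5) p.

Lemma nth_mul p q k : k < 5 -> nth 0 (mul p q) k = nth 0 q (nth 0 p k).
Proof. by move=> hk; rewrite /mul (nth_map 0) ?size_iota // nth_iota. Qed.

Lemma mulA p q r : lt5 p -> mul (mul p q) r = mul p (mul q r).
Proof.
move=> hp; rewrite {1 3}/mul; apply/eq_in_map => k; rewrite mem_iota add0n => /andP[_ hk].
rewrite nth_mul // nth_mul //.
case: (ltnP k (size p)) => hks; last by rewrite nth_default.
by apply: (allP hp); rewrite mem_nth.
Qed.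

Lemma elems_lt5 p : p \in elems -> lt5 p.
Proof.
have : all lt5 elems by vm_compute.
by move=> /allP h /h.
Qed.
Definition canonTable : seq (seq nat * seq nat) := [::
  ([::0;1;2;3;4], [::]);
  ([::1;0;2;3;4], [::0]);
  ([::0;2;1;3;4], [::1]);
  ([::0;1;3;2;4], [::2]);
  ([::0;1;2;4;3], [::3]);
  ([::1;2;0;3;4], [::1;0]);
  ([::1;0;3;2;4], [::2;0]);
  ([::1;0;2;4;3], [::3;0]);
  ([::2;0;1;3;4], [::0;1]);
  ([::0;2;3;1;4], [::2;1]);
  ([::0;2;1;4;3], [::3;1]);
  ([::0;3;1;2;4], [::1;2]);
  ([::0;1;3;4;2], [::3;2]);
  ([::0;1;4;2;3], [::2;3]);
  ([::2;1;0;3;4], [::0;1;0]);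
  ([::1;2;3;0;4], [::2;1;0]);
  ([::1;2;0;4;3], [::3;1;0]);
  ([::1;3;0;2;4], [::1;2;0]);
  ([::1;0;3;4;2], [::3;2;0]);
  ([::1;0;4;2;3], [::2;3;0]);
  ([::2;0;3;1;4], [::2;0;1]);
  ([::2;0;1;4;3], [::3;0;1]);
  ([::0;3;2;1;4], [::1;2;1]);
  ([::0;2;3;4;1], [::3;2;1]);
  ([::0;2;4;1;3], [::2;3;1]);
  ([::3;0;1;2;4], [::0;1;2]);
  ([::0;3;1;4;2], [::3;1;2]);
  ([::0;1;4;3;2], [::2;3;2]);
  ([::0;4;1;2;3], [::1;2;3]);
  ([::2;1;3;0;4], [::2;0;1;0]);
  ([::2;1;0;4;3], [::3;0;1;0]);
  ([::1;3;2;0;4], [::1;2;1;0]);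
  ([::1;2;3;4;0], [::3;2;1;0]);
  ([::1;2;4;0;3], [::2;3;1;0]);
  ([::3;1;0;2;4], [::0;1;2;0]);
  ([::1;3;0;4;2], [::3;1;2;0]);
  ([::1;0;4;3;2], [::2;3;2;0]);
  ([::1;4;0;2;3], [::1;2;3;0]);
  ([::2;3;0;1;4], [::1;2;0;1]);
  ([::2;0;3;4;1], [::3;2;0;1]);
  ([::2;0;4;1;3], [::2;3;0;1]);
  ([::3;0;2;1;4], [::0;1;2;1]);
  ([::0;3;2;4;1], [::3;1;2;1]);
  ([::0;2;4;3;1], [::2;3;2;1]);
  ([::0;4;2;1;3], [::1;2;3;1]);
  ([::3;0;1;4;2], [::3;0;1;2]);
  ([::0;3;4;1;2], [::2;3;1;2]);
  ([::0;4;1;3;2], [::1;2;3;2]);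
  ([::4;0;1;2;3], [::0;1;2;3]);
  ([::2;3;1;0;4], [::1;2;0;1;0]);
  ([::2;1;3;4;0], [::3;2;0;1;0]);
  ([::2;1;4;0;3], [::2;3;0;1;0]);
  ([::3;1;2;0;4], [::0;1;2;1;0]);
  ([::1;3;2;4;0], [::3;1;2;1;0]);
  ([::1;2;4;3;0], [::2;3;2;1;0]);
  ([::1;4;2;0;3], [::1;2;3;1;0]);
  ([::3;1;0;4;2], [::3;0;1;2;0]);
  ([::1;3;4;0;2], [::2;3;1;2;0]);
  ([::1;4;0;3;2], [::1;2;3;2;0]);
  ([::4;1;0;2;3], [::0;1;2;3;0]);
  ([::3;2;0;1;4], [::0;1;2;0;1]);
  ([::2;3;0;4;1], [::3;1;2;0;1]);
  ([::2;0;4;3;1], [::2;3;2;0;1]);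
  ([::2;4;0;1;3], [::1;2;3;0;1]);
  ([::3;0;2;4;1], [::3;0;1;2;1]);
  ([::0;3;4;2;1], [::2;3;1;2;1]);
  ([::0;4;2;3;1], [::1;2;3;2;1]);
  ([::4;0;2;1;3], [::0;1;2;3;1]);
  ([::3;0;4;1;2], [::2;3;0;1;2]);
  ([::0;4;3;1;2], [::1;2;3;1;2]);
  ([::4;0;1;3;2], [::0;1;2;3;2]);
  ([::3;2;1;0;4], [::0;1;2;0;1;0]);
  ([::2;3;1;4;0], [::3;1;2;0;1;0]);
  ([::2;1;4;3;0], [::2;3;2;0;1;0]);
  ([::2;4;1;0;3], [::1;2;3;0;1;0]);
  ([::3;1;2;4;0], [::3;0;1;2;1;0]);
  ([::1;3;4;2;0], [::2;3;1;2;1;0]);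
  ([::1;4;2;3;0], [::1;2;3;2;1;0]);
  ([::4;1;2;0;3], [::0;1;2;3;1;0]);
  ([::3;1;4;0;2], [::2;3;0;1;2;0]);
  ([::1;4;3;0;2], [::1;2;3;1;2;0]);
  ([::4;1;0;3;2], [::0;1;2;3;2;0]);
  ([::3;2;0;4;1], [::3;0;1;2;0;1]);
  ([::2;3;4;0;1], [::2;3;1;2;0;1]);
  ([::2;4;0;3;1], [::1;2;3;2;0;1]);
  ([::4;2;0;1;3], [::0;1;2;3;0;1]);
  ([::3;0;4;2;1], [::2;3;0;1;2;1]);
  ([::0;4;3;2;1], [::1;2;3;1;2;1]);
  ([::4;0;2;3;1], [::0;1;2;3;2;1]);
  ([::3;4;0;1;2], [::1;2;3;0;1;2]);
  ([::4;0;3;1;2], [::0;1;2;3;1;2]);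
  ([::3;2;1;4;0], [::3;0;1;2;0;1;0]);
  ([::2;3;4;1;0], [::2;3;1;2;0;1;0]);
  ([::2;4;1;3;0], [::1;2;3;2;0;1;0]);
  ([::4;2;1;0;3], [::0;1;2;3;0;1;0]);
  ([::3;1;4;2;0], [::2;3;0;1;2;1;0]);
  ([::1;4;3;2;0], [::1;2;3;1;2;1;0]);
  ([::4;1;2;3;0], [::0;1;2;3;2;1;0]);
  ([::3;4;1;0;2], [::1;2;3;0;1;2;0]);
  ([::4;1;3;0;2], [::0;1;2;3;1;2;0]);
  ([::3;2;4;0;1], [::2;3;0;1;2;0;1]);
  ([::2;4;3;0;1], [::1;2;3;1;2;0;1]);
  ([::4;2;0;3;1], [::0;1;2;3;2;0;1]);
  ([::3;4;0;2;1], [::1;2;3;0;1;2;1]);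
  ([::4;0;3;2;1], [::0;1;2;3;1;2;1]);
  ([::4;3;0;1;2], [::0;1;2;3;0;1;2]);
  ([::3;2;4;1;0], [::2;3;0;1;2;0;1;0]);
  ([::2;4;3;1;0], [::1;2;3;1;2;0;1;0]);
  ([::4;2;1;3;0], [::0;1;2;3;2;0;1;0]);
  ([::3;4;1;2;0], [::1;2;3;0;1;2;1;0]);
  ([::4;1;3;2;0], [::0;1;2;3;1;2;1;0]);
  ([::4;3;1;0;2], [::0;1;2;3;0;1;2;0]);
  ([::3;4;2;0;1], [::1;2;3;0;1;2;0;1]);
  ([::4;2;3;0;1], [::0;1;2;3;1;2;0;1]);
  ([::4;3;0;2;1], [::0;1;2;3;0;1;2;1]);
  ([::3;4;2;1;0], [::1;2;3;0;1;2;0;1;0]);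
  ([::4;2;3;1;0], [::0;1;2;3;1;2;0;1;0]);
  ([::4;3;1;2;0], [::0;1;2;3;0;1;2;1;0]);
  ([::4;3;2;0;1], [::0;1;2;3;0;1;2;0;1]);
  ([::4;3;2;1;0], [::0;1;2;3;0;1;2;0;1;0])
].
Definition certTable : seq (nat * seq nat * seq nat) := [::
  (0, [::0;1;3;2;4], [::0]);
  (0, [::0;1;2;4;3], [::0]);
  (0, [::0;2;3;1;4], [::0]);
  (0, [::0;2;1;4;3], [::0]);
  (0, [::0;1;3;4;2], [::0;1]);
  (0, [::0;1;4;2;3], [::0;1]);
  (0, [::1;2;3;0;4], [::0]);
  (0, [::1;2;0;4;3], [::0]);
  (0, [::0;2;3;4;1], [::0;1]);
  (0, [::0;2;4;1;3], [::0;1]);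
  (0, [::0;3;1;4;2], [::0]);
  (0, [::0;1;4;3;2], [::0;1;2]);
  (0, [::1;2;3;4;0], [::0;1]);
  (0, [::1;2;4;0;3], [::0;1]);
  (0, [::1;3;0;4;2], [::0]);
  (0, [::0;3;2;4;1], [::0]);
  (0, [::0;2;4;3;1], [::0;1;2]);
  (0, [::0;3;4;1;2], [::0;1]);
  (0, [::1;3;2;4;0], [::0]);
  (0, [::1;2;4;3;0], [::0;1;2]);
  (0, [::1;3;4;0;2], [::0;1]);
  (0, [::2;3;0;4;1], [::0]);
  (0, [::0;3;4;2;1], [::0;1]);
  (0, [::2;3;1;4;0], [::0]);
  (0, [::1;3;4;2;0], [::0;1]);
  (0, [::2;3;4;0;1], [::0;1]);
  (0, [::2;3;4;1;0], [::0;1]);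
  (1, [::0;1;2;4;3], [::0]);
  (1, [::1;0;2;4;3], [::0]);
  (1, [::2;0;1;3;4], [::0]);
  (1, [::0;1;3;4;2], [::0]);
  (1, [::1;0;3;4;2], [::0]);
  (1, [::2;0;1;4;3], [::0;1]);
  (1, [::0;2;3;4;1], [::0]);
  (1, [::3;0;1;2;4], [::0;2]);
  (1, [::1;2;3;4;0], [::0]);
  (1, [::2;0;3;4;1], [::0]);
  (1, [::3;0;2;1;4], [::0;2]);
  (1, [::3;0;1;4;2], [::0;1;3]);
  (1, [::4;0;1;2;3], [::0;2;3]);
  (1, [::2;1;3;4;0], [::0]);
  (1, [::3;1;2;0;4], [::0;2]);
  (1, [::3;0;2;4;1], [::0;1;3]);
  (1, [::4;0;2;1;3], [::0;2;3]);
  (1, [::4;0;1;3;2], [::0;2;3;4]);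
  (1, [::3;1;2;4;0], [::0;1;3]);
  (1, [::4;1;2;0;3], [::0;2;3]);
  (1, [::4;0;2;3;1], [::0;2;3;4]);
  (1, [::4;0;3;1;2], [::0;2;3]);
  (1, [::4;1;2;3;0], [::0;2;3;4]);
  (1, [::4;1;3;0;2], [::0;2;3]);
  (1, [::4;0;3;2;1], [::0;2;3]);
  (1, [::4;1;3;2;0], [::0;2;3]);
  (1, [::4;2;3;0;1], [::0;2;3]);
  (1, [::4;2;3;1;0], [::0;2;3]);
  (2, [::0;3;1;2;4], [::0]);
  (2, [::1;3;0;2;4], [::0]);
  (2, [::3;0;1;2;4], [::0;1]);
  (2, [::0;4;1;2;3], [::0;2]);
  (2, [::3;1;0;2;4], [::0;1]);
  (2, [::1;4;0;2;3], [::0;2]);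
  (2, [::2;3;0;1;4], [::0;2]);
  (2, [::0;4;1;3;2], [::0;2]);
  (2, [::4;0;1;2;3], [::0;1;3]);
  (2, [::1;4;0;3;2], [::0;2]);
  (2, [::4;1;0;2;3], [::0;1;3]);
  (2, [::3;2;0;1;4], [::0;1;3]);
  (2, [::2;4;0;1;3], [::0;2;3]);
  (2, [::0;4;2;3;1], [::0;2]);
  (2, [::4;0;1;3;2], [::0;1;3]);
  (2, [::1;4;2;3;0], [::0;2]);
  (2, [::4;1;0;3;2], [::0;1;3]);
  (2, [::2;4;0;3;1], [::0;2]);
  (2, [::4;2;0;1;3], [::0;1;3;4]);
  (2, [::4;0;2;3;1], [::0;1;3]);
  (2, [::3;4;0;1;2], [::0;2;3;5]);
  (2, [::2;4;1;3;0], [::0;2]);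
  (2, [::4;1;2;3;0], [::0;1;3]);
  (2, [::4;2;0;3;1], [::0;1;3]);
  (2, [::3;4;0;2;1], [::0;2;3;5]);
  (2, [::4;3;0;1;2], [::0;1;3;4;6]);
  (2, [::4;2;1;3;0], [::0;1;3]);
  (2, [::3;4;1;2;0], [::0;2;3;5]);
  (2, [::4;3;0;2;1], [::0;1;3;4;6]);
  (2, [::4;3;1;2;0], [::0;1;3;4;6]);
  (3, [::0;1;4;2;3], [::0]);
  (3, [::1;0;4;2;3], [::0]);
  (3, [::0;2;4;1;3], [::0]);
  (3, [::0;4;1;2;3], [::0;1]);
  (3, [::1;2;4;0;3], [::0]);
  (3, [::1;4;0;2;3], [::0;1]);
  (3, [::2;0;4;1;3], [::0]);
  (3, [::0;4;2;1;3], [::0;1]);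
  (3, [::0;3;4;1;2], [::0;2]);
  (3, [::4;0;1;2;3], [::0;1;2]);
  (3, [::2;1;4;0;3], [::0]);
  (3, [::1;4;2;0;3], [::0;1]);
  (3, [::1;3;4;0;2], [::0;2]);
  (3, [::4;1;0;2;3], [::0;1;2]);
  (3, [::2;4;0;1;3], [::0;1]);
  (3, [::4;0;2;1;3], [::0;1;2]);
  (3, [::3;0;4;1;2], [::0;2;3]);
  (3, [::0;4;3;1;2], [::0;1;3]);
  (3, [::2;4;1;0;3], [::0;1]);
  (3, [::4;1;2;0;3], [::0;1;2]);
  (3, [::3;1;4;0;2], [::0;2;3]);
  (3, [::1;4;3;0;2], [::0;1;3]);
  (3, [::2;3;4;0;1], [::0;2;4]);
  (3, [::4;2;0;1;3], [::0;1;2]);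
  (3, [::3;4;0;1;2], [::0;1;3;4]);
  (3, [::4;0;3;1;2], [::0;1;2;4]);
  (3, [::4;2;1;0;3], [::0;1;2]);
  (3, [::3;4;1;0;2], [::0;1;3;4]);
  (3, [::4;1;3;0;2], [::0;1;2;4]);
  (3, [::3;2;4;0;1], [::0;2;3;5]);
  (3, [::2;4;3;0;1], [::0;1;3;5]);
  (3, [::4;3;0;1;2], [::0;1;2;4;5]);
  (3, [::4;3;1;0;2], [::0;1;2;4;5]);
  (3, [::3;4;2;0;1], [::0;1;3;4;6]);
  (3, [::4;2;3;0;1], [::0;1;2;4;6]);
  (3, [::4;3;2;0;1], [::0;1;2;4;5;7])
].

Fixpoint lookupC (q : pm) (t : seq (pm * seq nat)) : seq nat :=
  match t with [::] => [::] | (a, w) :: t' => if a == q then w else lookupC q t' end.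
Definition canonNd q := lookupC q canonTable.
Fixpoint lookupK (n : nat) (q : pm) (t : seq (nat * pm * seq nat)) : seq nat :=
  match t with [::] => [::] | (m, a, w) :: t' => if (m == n) && (a == q) then w else lookupK n q t' end.
Definition certFor n q := lookupK n q certTable.

Definition piN (w : seq nat) : pm := foldr (fun n acc => mul (gen n) acc) one w.

Definition move (k : nat) (w : seq nat) : seq nat :=
  match drop k w with
  | x :: y :: r =>
      if (x < 4) && (y < 4) && ((x.+2 <= y) || (y.+2 <= x)) then take k w ++ y :: x :: r
      else match r with
           | z :: r' => if (z == x) && (x < 4) && (y < 4) && ((x == y.+1) || (y == x.+1))
                        then take k w ++ y :: x :: y :: r' else w
           | [::] => w end
  | _ => w end.

Definition longer n q := size (canonNd (mul (gen n) q)) == (size (canonNd q)).+1.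
Definition stepOK n q :=
  if longer n q then foldl (fun w k => move k w) (n :: canonNd q) (certFor n q) == canonNd (mul (gen n) q)
  else (mul (gen n) (mul (gen n) q) == q) && longer n (mul (gen n) q).

Lemma allStep : all (fun n => all (stepOK n) elems) (iota 0 4).
Proof. by vm_compute. Qed.

Lemma closure_check : all (fun p => all (fun q => mul p q \in elems) elems) elems.
Proof. by vm_compute. Qed.
Lemma mul_elems p q : p \in elems -> q \in elems -> mul p q \in elems.
Proof. by move=> hp hq; have /allP/(_ p hp)/allP/(_ q hq) := closure_check. Qed.
Lemma gen_elems n : gen n \in elems.
Proof. by case: n => [|[|[|n]]]; vm_compute. Qed.
Lemma one_elems : one \in elems. Proof. by vm_compute. Qed.
Lemma piN_elems w : piN w \in elems.
Proof. elim: w => [|n w IH] /=; [exact: one_elems | exact: mul_elems (gen_elems n) IH]. Qed.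

Lemma piN_canon_check : all (fun q => piN (canonNd q) == q) elems.
Proof. by vm_compute. Qed.
Lemma piN_canon q : q \in elems -> piN (canonNd q) = q.
Proof. by move=> hq; apply/eqP; have /allP := piN_canon_check; apply. Qed.

Lemma mul1p_check : all (fun q => (mul one q == q) && (mul q one == q)) elems.
Proof. by vm_compute. Qed.
Lemma mul1p q : q \in elems -> mul one q = q.
Proof. by move=> hq; have /allP/(_ q hq)/andP[/eqP ->] := mul1p_check. Qed.
Lemma mulp1 q : q \in elems -> mul q one = q.
Proof. by move=> hq; have /allP/(_ q hq)/andP[_ /eqP ->] := mul1p_check. Qed.

Lemma piN_cat u v : piN (u ++ v) = mul (piN u) (piN v).
Proof.
elim: u => [|n u IH] /=; first by rewrite mul1p // piN_elems.
by rewrite IH mulA // elems_lt5 // gen_elems.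
Qed.

Definition mk (b : bool) (n : nat) : letter := (b, inord n).
Definition mkw b (w : seq nat) : word := map (mk b) w.

Lemma mkw_cat b u v : mkw b (u ++ v) = mkw b u ++ mkw b v.
Proof. exact: map_cat. Qed.

Lemma move_sound b k w : weq (mkw b w) (mkw b (move k w)).
Proof.
rewrite /move; have hw := cat_take_drop k w.
case E: (drop k w) => [|x [|y r]]; try exact: weq_refl.
case: ifP => [/andP[/andP[hx hy] hf]|_].
  rewrite -{1}hw E !mkw_cat; apply: weq_catl.
  apply: (@weq_catr (mkw b r) [:: mk b x; mk b y] [:: mk b y; mk b x]).
  apply: weq_comm; by rewrite !inordK.
case: r E => [|z r] E; try exact: weq_refl.
case: ifP => [/andP[/andP[/andP[/eqP hz hx] hy] ha]|_]; last exact: weq_refl.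
rewrite -{1}hw E hz !mkw_cat; apply: weq_catl.
apply: (@weq_catr (mkw b r) [:: mk b x; mk b y; mk b x] [:: mk b y; mk b x; mk b y]).
case/orP: ha => /eqP ha.
  apply: weq_sym; apply: weq_braid; by rewrite !inordK.
apply: weq_braid; by rewrite !inordK.
Qed.

Lemma moves_sound b ks w : weq (mkw b w) (mkw b (foldl (fun w k => move k w) w ks)).
Proof.
elim: ks w => [|k ks IH] w /=; first exact: weq_refl.
exact: weq_trans (move_sound b k w) (IH _).
Qed.

Lemma step_long b n q : n < 4 -> q \in elems -> longer n q ->
  weq (mkw b (n :: canonNd q)) (mkw b (canonNd (mul (gen n) q))).
Proof.
move=> hn hq hl.
have /allP/(_ n) := allStep; rewrite mem_iota add0n => /(_ hn)/allP/(_ q hq).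
rewrite /stepOK hl => /eqP <-; exact: moves_sound.
Qed.

Lemma step_canon b n q : n < 4 -> q \in elems ->
  weq (mkw b (n :: canonNd q)) (mkw b (canonNd (mul (gen n) q))).
Proof.
move=> hn hq.
have /allP/(_ n) := allStep; rewrite mem_iota add0n => /(_ hn)/allP/(_ q hq).
rewrite /stepOK; case: ifP => hl; first by move=> _; exact: step_long.
case/andP=> /eqP hqq hl'.
set q' := mul (gen n) q in hqq hl' *.
have hq' : q' \in elems by apply: mul_elems => //; exact: gen_elems.
have := step_long b hn hq' hl'; rewrite hqq => h.
apply: weq_trans (weq_cons (mk b n) (weq_sym h)) _.
exact: weq_cancel.
Qed.

Lemma canon_lemma b w : all (fun k => k < 4) w -> weq (mkw b w) (mkw b (canonNd (piN w))).
Proof.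
elim: w => [|n w IH] /=.
  by move=> _; vm_compute; exact: weq_refl.
case/andP=> hn /IH h.
apply: weq_trans (weq_cons (mk b n) h) _.
apply: step_canon => //; exact: piN_elems.
Qed.

Fact canonN_key : unit. Proof. exact: tt. Qed.
Definition canonN := locked_with canonN_key canonNd.
Lemma canonN_E : canonN = canonNd. Proof. exact: unlock. Qed.
Lemma canon_lemmaN b w : all (fun k => k < 4) w -> weq (mkw b w) (mkw b (canonN (piN w))).
Proof. rewrite canonN_E; exact: canon_lemma. Qed.

Fixpoint lexlt (p q : seq nat) : bool :=
  match p, q with
  | x :: p', y :: q' => (x < y) || ((x == y) && lexlt p' q')
  | _, _ => false
  end.
Definition rep (z : pm) : pm := if lexlt (mul z g4) z then mul z g4 else z.
Definition splitd (z : pm) : pm * pm := (rep z, if rep z == z then one else g4).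
Fact split_key : unit. Proof. exact: tt. Qed.
Definition split := locked_with split_key splitd.
Lemma split_E : split = splitd. Proof. exact: unlock. Qed.
Arguments rep : simpl never.
Definition isC (c : pm) := (c == one) || (c == g4).
Definition isLT (y : pm) := (y \in elems) && (rep y == y).
Definition nt (y : pm) := isLT y && (y != one).

Fixpoint inv_count (p : seq nat) : nat :=
  match p with [::] => 0 | x :: r => count (fun y => y < x) r + inv_count r end.
Definition sgn (p : pm) : bool := odd (inv_count p).

Lemma FA_check : all (fun z => isLT (splitd z).1 && isC (splitd z).2 && (mul (splitd z).1 (splitd z).2 == z)) elems.
Proof. by vm_compute. Qed.
Lemma FB_check : all (fun a => all (fun b => splitd (mul a b) ==
   ((splitd (mul a (splitd b).1)).1, mul (splitd (mul a (splitd b).1)).2 (splitd b).2)) elems) elems.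
Proof. by vm_compute. Qed.
Lemma FD_check : all (fun c => all (fun al => ~~ nt al || ((splitd (mul c al)).1 != one)) elems) [:: one; g4].
Proof. by vm_compute. Qed.
Lemma Fix_check : all (fun a => (a == one) || sgn a ||
   all (fun h => (rep h != h) || ((splitd (mul a h)).1 != h)) elems) elems.
Proof. by vm_compute. Qed.
Lemma sgn_check : all (fun n => all (fun q => sgn (mul (gen n) q) == ~~ sgn q) elems) (iota 0 4).
Proof. by vm_compute. Qed.
Lemma canon_lt4_check : all (fun q => all (fun k => k < 4) (canonNd q)) elems.
Proof. by vm_compute. Qed.

Lemma split_spec z : z \in elems ->
  [/\ isLT (split z).1, isC (split z).2 & mul (split z).1 (split z).2 = z].
Proof. rewrite split_E. by move=> hz; have /allP/(_ z hz)/andP[/andP[h1 h2] /eqP h3] := FA_check. Qed.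
Lemma split_mul a b : a \in elems -> b \in elems ->
  split (mul a b) = ((split (mul a (split b).1)).1, mul (split (mul a (split b).1)).2 (split b).2).
Proof. rewrite split_E. by move=> ha hb; apply/eqP; have /allP/(_ a ha)/allP/(_ b hb) := FB_check. Qed.
Lemma isC_elems c : isC c -> c \in elems.
Proof. by case/orP=> /eqP ->; vm_compute. Qed.
Lemma isLT_elems c : isLT c -> c \in elems.
Proof. by case/andP. Qed.
Lemma nt_isLT c : nt c -> isLT c. Proof. by case/andP. Qed.
Lemma split_LT y : isLT y -> split y = (y, one).
Proof. by case/andP=> _ /eqP h; rewrite split_E /splitd h eqxx. Qed.
Lemma split_nt c al : isC c -> nt al -> (split (mul c al)).1 != one.
Proof.
rewrite split_E => hc hal; have /allP h := FD_check.
have hc' : c \in [:: one; g4] by case/orP: hc => /eqP ->.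
by have /allP/(_ al (isLT_elems (nt_isLT hal))) := h c hc'; rewrite hal.
Qed.
Lemma mulC c1 c2 : isC c1 -> isC c2 -> isC (mul c1 c2).
Proof. by case/orP=> /eqP -> /orP[] /eqP ->; vm_compute. Qed.
Lemma split_one : split one = (one, one). Proof. by rewrite split_E; vm_compute. Qed.
Lemma split_C c : isC c -> split c = (one, c).
Proof. by rewrite split_E; case/orP=> /eqP ->; vm_compute. Qed.
Lemma isC_one : isC one. Proof. by []. Qed.
Lemma isLT_one : isLT one. Proof. by vm_compute. Qed.
Lemma g4g4 : mul g4 g4 = one. Proof. by vm_compute. Qed.
Lemma nt_one c : nt c -> c != one. Proof. by case/andP. Qed.

Lemma split_mulC a c : a \in elems -> isC c -> split (mul a c) = ((split a).1, mul (split a).2 c).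
Proof.
move=> ha hc; rewrite split_mul //; last exact: isC_elems.
by rewrite (split_C hc) /= mulp1.
Qed.

(* ---------- the amalgam P = B' *_D B'^c : normal forms ---------- *)
Definition Pnf := (seq (bool * pm) * pm)%type.
Definition P1 : Pnf := ([::], one).

Fixpoint carryD (e : pm) (bs : seq (bool * pm)) (d : pm) : Pnf :=
  match bs with
  | [::] => ([::], mul e d)
  | t :: r => ((t.1, (split (mul e t.2)).1) :: (carryD (split (mul e t.2)).2 r d).1,
               (carryD (split (mul e t.2)).2 r d).2)
  end.

Lemma carryD_cons e t r d : carryD e (t :: r) d =
  ((t.1, (split (mul e t.2)).1) :: (carryD (split (mul e t.2)).2 r d).1,
   (carryD (split (mul e t.2)).2 r d).2).
Proof. by []. Qed.
Lemma carryD_nil e d : carryD e [::] d = ([::], mul e d).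
Proof. by []. Qed.

Definition hd0 (bs : seq (bool * pm)) : pm := if bs is (false, b) :: _ then b else one.
Definition tl0 (bs : seq (bool * pm)) : seq (bool * pm) := if bs is (false, _) :: r then r else bs.
Definition hdF (bs : seq (bool * pm)) : bool := if bs is (false, _) :: _ then true else false.

Definition front (y : pm) (q : Pnf) : Pnf := if y == one then q else ((false, y) :: q.1, q.2).

Definition actP (b : pm) (p : Pnf) : Pnf :=
  front (split (mul b (hd0 p.1))).1 (carryD (split (mul b (hd0 p.1))).2 (tl0 p.1) p.2).

Definition flipb (t : bool * pm) := (~~ t.1, t.2).
Definition swapP (c : pm) (p : Pnf) : Pnf := if c == one then p else (map flipb p.1, p.2).

Definition wfBs (bs : seq (bool * pm)) := sorted (fun u v => u.1 != v.1) bs && all (fun t => nt t.2) bs.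
Definition wfP (p : Pnf) := wfBs p.1 && isC p.2.

Lemma carryD_tags e bs d : map fst (carryD e bs d).1 = map fst bs.
Proof. by elim: bs e => [|t r IH] e //=; rewrite IH. Qed.

Lemma path_tags (t t' : bool * pm) bs bs' : map fst (t :: bs) = map fst (t' :: bs') ->
  path (fun u v => u.1 != v.1) t bs = path (fun u v => u.1 != v.1) t' bs'.
Proof.
elim: bs t t' bs' => [|u r IH] t t' [|u' r'] //= [h1 h2 h3].
by rewrite h1 h2 (IH u u' r') //= h2 h3.
Qed.

Lemma sorted_tags (bs bs' : seq (bool * pm)) : map fst bs = map fst bs' ->
  sorted (fun u v => u.1 != v.1) bs = sorted (fun u v => u.1 != v.1) bs'.
Proof. by case: bs bs' => [|t r] [|t' r'] //= h; apply: path_tags. Qed.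

Lemma carryD_wf e bs d : isC e -> wfBs bs -> isC d ->
  wfBs (carryD e bs d).1 /\ isC (carryD e bs d).2.
Proof.
rewrite /wfBs => he /andP[hs ha] hd; rewrite (sorted_tags (carryD_tags e bs d)) hs /=.
elim: bs e he {hs} ha => [|t r IH] e he /=; first by split => //; exact: mulC.
case/andP=> ht hr.
have hz : mul e t.2 \in elems by apply: mul_elems; [exact: isC_elems|exact: isLT_elems (nt_isLT ht)].
case: (split_spec hz) => h1 h2 _.
have [-> ->] := IH _ h2 hr.
by rewrite /nt h1 split_nt.
Qed.

Lemma hdF_carryD e bs d : hdF (carryD e bs d).1 = hdF bs.
Proof. by case: bs => [|[[] b] r]. Qed.

Lemma wfBs_tl0 bs : wfBs bs -> wfBs (tl0 bs) /\ ~~ hdF (tl0 bs).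
Proof.
case: bs => [|[tg b] r]; first by [].
case: tg => /=; first by [].
rewrite /wfBs /= => /andP[hs /andP[hb hr]].
rewrite hr (path_sorted hs) /=; split => //.
by case: r hs {hr} => [|[[] b'] r'] //= /andP[].
Qed.

Lemma hd0_isLT bs : wfBs bs -> isLT (hd0 bs).
Proof. case: bs => [|[[] b] r] //=; try (by move=> _; exact: isLT_one).
by rewrite /wfBs /= => /andP[_ /andP[/nt_isLT h _]].
Qed.

Lemma front_wf y q : isLT y -> wfP q -> ~~ hdF q.1 -> wfP (front y q).
Proof.
rewrite /front; case: eqP => [_ //|hy] hl /andP[/andP[hs ha] hc] hh.
rewrite /wfP /wfBs /= hc ha /= andbT.
have -> : nt y by rewrite /nt hl; apply/eqP.
case: q.1 hs hh => [|[[] b] r] //= hs _; by rewrite hs.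
Qed.

Lemma actP_wf b p : b \in elems -> wfP p -> wfP (actP b p).
Proof.
case: p => bs d hb /andP[/= hbs hd]; rewrite /actP /=.
have [htl hnf] := wfBs_tl0 hbs.
have hz : mul b (hd0 bs) \in elems by apply: mul_elems => //; exact: isLT_elems (hd0_isLT hbs).
case: (split_spec hz) => h1 h2 _.
have [hw1 hw2] := carryD_wf h2 htl hd.
apply: front_wf => //; first by rewrite /wfP hw1 hw2.
by rewrite hdF_carryD.
Qed.

Lemma carryD_comp c1 c2 bs d : isC c1 -> isC c2 -> all (fun t => nt t.2) bs -> isC d ->
  carryD c1 (carryD c2 bs d).1 (carryD c2 bs d).2 = carryD (mul c1 c2) bs d.
Proof.
elim: bs c1 c2 => [|t r IH] c1 c2 h1 h2.
  by move=> _ hd; rewrite !carryD_nil mulA // elems_lt5 // isC_elems.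
case/andP=> ht hr hd.
have hte : t.2 \in elems by exact: isLT_elems (nt_isLT ht).
have hz : mul c2 t.2 \in elems by apply: mul_elems => //; exact: isC_elems.
case: (split_spec hz) => hy he _.
rewrite /= mulA ?elems_lt5 ?isC_elems // (@split_mul c1 (mul c2 t.2) (isC_elems h1) hz).
rewrite IH //.
have hz' : mul c1 (split (mul c2 t.2)).1 \in elems.
  by apply: mul_elems; [exact: isC_elems|exact: isLT_elems].
by case: (split_spec hz').
Qed.

Lemma carryD_one bs d : all (fun t => nt t.2) bs -> isC d -> carryD one bs d = (bs, d).
Proof.
elim: bs => [|t r IH] /=; first by move=> _ hd; rewrite mul1p // isC_elems.
case/andP=> ht hr hd.
rewrite mul1p ?(isLT_elems (nt_isLT ht)) // split_LT ?(nt_isLT ht) //= IH //.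
by case: t ht.
Qed.

Lemma front_snd y q : (front y q).2 = q.2.
Proof. by rewrite /front; case: ifP. Qed.

Lemma front_hd y q : isLT y -> ~~ hdF q.1 -> hd0 (front y q).1 = y /\ tl0 (front y q).1 = q.1.
Proof.
rewrite /front; case: eqP => [-> _|hy _] hh //=.
by case: q.1 hh => [|[[] b] r].
Qed.

Lemma actP_comp a b p : a \in elems -> b \in elems -> wfP p ->
  actP a (actP b p) = actP (mul a b) p.
Proof.
case: p => bs d ha hb /andP[/= hbs hd]; rewrite /actP /=.
have [htl hnf] := wfBs_tl0 hbs.
have hh : hd0 bs \in elems by exact: isLT_elems (hd0_isLT hbs).
have hz : mul b (hd0 bs) \in elems by apply: mul_elems.
case: (split_spec hz) => h1 h2 _.
have hnf' : ~~ hdF (carryD (split (mul b (hd0 bs))).2 (tl0 bs) d).1 by rewrite hdF_carryD.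
have [-> ->] := front_hd h1 hnf'.
rewrite mulA ?elems_lt5 // (@split_mul a (mul b (hd0 bs)) ha hz).
have hz' : mul a (split (mul b (hd0 bs))).1 \in elems by apply: mul_elems => //; exact: isLT_elems.
case: (split_spec hz') => h1' h2' _.
have hall : all (fun t => nt t.2) (tl0 bs) by case/andP: htl.
have E : carryD (split (mul a (split (mul b (hd0 bs))).1)).2
     (carryD (split (mul b (hd0 bs))).2 (tl0 bs) d).1
     (carryD (split (mul b (hd0 bs))).2 (tl0 bs) d).2 =
   carryD (mul (split (mul a (split (mul b (hd0 bs))).1)).2 (split (mul b (hd0 bs))).2) (tl0 bs) d.
  exact: carryD_comp.
by rewrite front_snd /= E.
Qed.

Lemma actP_one p : wfP p -> actP one p = p.
Proof.
case: p => bs d /andP[/= hbs hd]; rewrite /actP /=.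
have hh := hd0_isLT hbs.
rewrite mul1p ?isLT_elems // split_LT //=.
have [htl _] := wfBs_tl0 hbs.
rewrite carryD_one //; last by case/andP: htl.
rewrite /front; case: bs hbs hh {htl} => [|[[] b] r] //= hbs _.
by case/andP: hbs => _ /andP[/andP[_ /negbTE ->]].
Qed.

(* ---------- the G-set X = G/A ---------- *)
Definition Xt := (Pnf * seq (pm * Pnf))%type.

Fixpoint carryX (c : pm) (tl : seq (pm * Pnf)) : seq (pm * Pnf) :=
  match tl with
  | [::] => [::]
  | t :: r => ((split (mul c t.1)).1, swapP (split (mul c t.1)).2 t.2) :: carryX (split (mul c t.1)).2 r
  end.

Definition frontX (y c : pm) (p : Pnf) (tl : seq (pm * Pnf)) : Xt :=
  if y == one then (swapP c p, carryX c tl) else (P1, (y, swapP c p) :: carryX c tl).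

Definition special (x : Xt) := (x.1 == P1) && (x.2 == [::]).
Definition hX (x : Xt) : pm := if x.1 != P1 then one else (if x.2 is t :: _ then t.1 else one).
Definition pX (x : Xt) : Pnf := if x.1 != P1 then x.1 else (if x.2 is t :: _ then t.2 else P1).
Definition rX (x : Xt) : seq (pm * Pnf) := if x.1 != P1 then x.2 else behead x.2.

Definition actA (a : pm) (x : Xt) : Xt :=
  if special x then x
  else frontX (split (mul a (hX x))).1 (split (mul a (hX x))).2 (pX x) (rX x).

Definition wfT (tl : seq (pm * Pnf)) := all (fun t => nt t.1 && wfP t.2 && (t.2 != P1)) tl.
Definition wfX (x : Xt) := wfP x.1 && wfT x.2.

Lemma isC_cases c : isC c -> c = one \/ c = g4.
Proof. by case/orP=> /eqP ->; [left|right]. Qed.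

Lemma map_flipbK bs : map flipb (map flipb bs) = bs.
Proof. by rewrite -map_comp map_id_in // => -[t b] _; rewrite /flipb /= negbK. Qed.

Lemma swapP_one p : swapP one p = p.
Proof. by rewrite /swapP eqxx. Qed.

Lemma g4_neq : (g4 == one) = false. Proof. by []. Qed.

Lemma swapP_comp c1 c2 p : isC c1 -> isC c2 -> swapP c1 (swapP c2 p) = swapP (mul c1 c2) p.
Proof.
move=> /isC_cases[]-> /isC_cases[]->.
- by rewrite mul1p ?one_elems // !swapP_one.
- by rewrite mul1p ?swapP_one //; vm_compute.
- by rewrite mulp1 ?swapP_one //; vm_compute.
- rewrite g4g4 swapP_one /swapP g4_neq /=; case: p => bs d /=; by rewrite map_flipbK.
Qed.

Lemma swapP_P1 c p : (swapP c p == P1) = (p == P1).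
Proof.
rewrite /swapP; case: ifP => // _; case: p => [[|t r] d] //.
Qed.

Lemma sorted_flip bs : sorted (fun u v => u.1 != v.1) (map flipb bs) = sorted (fun u v => u.1 != v.1) bs.
Proof.
case: bs => [|t r] //=; elim: r t => [|u r IH] t //=.
by rewrite IH /flipb /= (inj_eq negb_inj).
Qed.

Lemma swapP_wf c p : wfP p -> wfP (swapP c p).
Proof.
rewrite /swapP; case: ifP => // _; case: p => bs d /andP[/andP[hs ha] hd].
by rewrite /wfP /wfBs /= sorted_flip hs hd all_map /= andbT.
Qed.

Lemma carryX_wf c tl : isC c -> wfT tl -> wfT (carryX c tl).
Proof.
elim: tl c => [|t r IH] c hc //=.
case/andP=> /andP[/andP[ht hp] hp1] hr.
have hz : mul c t.1 \in elems by apply: mul_elems; [exact: isC_elems|exact: isLT_elems (nt_isLT ht)].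
case: (split_spec hz) => h1 h2 _.
rewrite IH // andbT swapP_wf // swapP_P1 hp1 andbT /nt h1 /= andbT.
exact: split_nt.
Qed.

Lemma carryX_comp c1 c2 tl : isC c1 -> isC c2 -> wfT tl ->
  carryX c1 (carryX c2 tl) = carryX (mul c1 c2) tl.
Proof.
elim: tl c1 c2 => [|t r IH] c1 c2 h1 h2 //=.
case/andP=> /andP[/andP[ht hp] hp1] hr.
have hte : t.1 \in elems by exact: isLT_elems (nt_isLT ht).
have hz : mul c2 t.1 \in elems by apply: mul_elems => //; exact: isC_elems.
case: (split_spec hz) => hy he _.
rewrite mulA ?elems_lt5 ?isC_elems // (@split_mul c1 (mul c2 t.1) (isC_elems h1) hz) /=.
have hz' : mul c1 (split (mul c2 t.1)).1 \in elems.
  by apply: mul_elems; [exact: isC_elems|exact: isLT_elems].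
case: (split_spec hz') => _ hc _.
by rewrite swapP_comp // IH.
Qed.

Lemma carryX_one tl : wfT tl -> carryX one tl = tl.
Proof.
elim: tl => [|t r IH] //=.
case/andP=> /andP[/andP[ht hp] hp1] hr.
rewrite mul1p ?(isLT_elems (nt_isLT ht)) // split_LT ?(nt_isLT ht) //= swapP_one IH //.
by case: t {ht hp hp1}.
Qed.

Lemma nonspecial_spec x : wfX x -> ~~ special x ->
  [/\ isLT (hX x), wfP (pX x), pX x != P1 & wfT (rX x)].
Proof.
case: x => p0 tl /andP[/= hp ht]; rewrite /special /hX /pX /rX /=.
case: eqP => [-> /=|/eqP hne _]; last by rewrite hne isLT_one.
case: tl ht => [|t r] //= /andP[/andP[/andP[h1 h2] h3] h4] _.
by rewrite (nt_isLT h1).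
Qed.

Lemma frontX_spec y c p R : isLT y -> isC c -> wfP p -> p != P1 -> wfT R ->
  [/\ wfX (frontX y c p R), ~~ special (frontX y c p R), hX (frontX y c p R) = y,
      pX (frontX y c p R) = swapP c p & rX (frontX y c p R) = carryX c R].
Proof.
move=> hy hc hp hp1 hR.
have hsw : swapP c p != P1 by rewrite swapP_P1.
have hcw := carryX_wf hc hR.
rewrite /frontX; case: eqP => [->|/eqP hne].
  by rewrite /wfX /special /hX /pX /rX /= (negbTE hsw) swapP_wf // hcw.
rewrite /wfX /special /hX /pX /rX /= hcw swapP_wf // hsw.
by rewrite /nt hy hne.
Qed.

Lemma actA_wf a x : a \in elems -> wfX x -> wfX (actA a x).
Proof.
move=> ha hx; rewrite /actA; case: ifP => // /negbT hs.
have [h1 h2 h3 h4] := nonspecial_spec hx hs.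
have hz : mul a (hX x) \in elems by apply: mul_elems => //; exact: isLT_elems.
case: (split_spec hz) => hy hc _.
by case: (frontX_spec hy hc h2 h3 h4).
Qed.

Lemma actA_ns a x : ~~ special x ->
  actA a x = frontX (split (mul a (hX x))).1 (split (mul a (hX x))).2 (pX x) (rX x).
Proof. by move=> h; rewrite /actA (negbTE h). Qed.

Lemma actA_comp a b x : a \in elems -> b \in elems -> wfX x ->
  actA a (actA b x) = actA (mul a b) x.
Proof.
move=> ha hb hx; case hs: (special x).
  have E : forall c, actA c x = x by move=> c; rewrite /actA hs.
  by rewrite !E.
have hs' : ~~ special x by rewrite hs.
have [h1 h2 h3 h4] := nonspecial_spec hx hs'.
have hz : mul b (hX x) \in elems by apply: mul_elems => //; exact: isLT_elems.
case: (split_spec hz) => hy hc _.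
rewrite (actA_ns b hs') (actA_ns (mul a b) hs').
case: (frontX_spec hy hc h2 h3 h4) => _ hs2 E1 E2 E3.
rewrite (actA_ns a hs2) E1 E2 E3.
rewrite mulA ?elems_lt5 // (@split_mul a (mul b (hX x)) ha hz).
have hz' : mul a (split (mul b (hX x))).1 \in elems by apply: mul_elems => //; exact: isLT_elems.
case: (split_spec hz') => _ hc' _.
by rewrite /frontX /= swapP_comp // carryX_comp.
Qed.

Lemma actA_one x : wfX x -> actA one x = x.
Proof.
move=> hx; rewrite /actA; case: ifP => // /negbT hs.
have [h1 h2 h3 h4] := nonspecial_spec hx hs.
rewrite mul1p ?isLT_elems // split_LT //= /frontX swapP_one carryX_one //.
case: x hx hs h1 h2 h3 h4 => p0 tl /andP[/= hp ht]; rewrite /special /hX /pX /rX /=.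
case: eqP => [-> /=|/eqP hne _]; last by rewrite hne eqxx.
case: tl ht => [|t r] //= /andP[/andP[/andP[ht1 _] _] _] _ _ _ _ _.
by rewrite (negbTE (nt_one ht1)); case: t ht1.
Qed.

Definition act_letter (l : letter) (x : Xt) : Xt :=
  if l.1 then actA (gen l.2) x else (actP (gen l.2) x.1, x.2).
Definition actw (w : word) (x : Xt) : Xt := foldr act_letter x w.
Definition piL (w : word) : pm := piN (map (fun l : letter => nat_of_ord l.2) w).

Lemma actw_cat u v x : actw (u ++ v) x = actw u (actw v x).
Proof. exact: foldr_cat. Qed.

Lemma act_letter_wf l x : wfX x -> wfX (act_letter l x).
Proof.
rewrite /act_letter; case: ifP => _ hx; first by apply: actA_wf => //; exact: gen_elems.
case/andP: hx => h1 h2; rewrite /wfX /= h2 andbT; apply: actP_wf => //; exact: gen_elems.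
Qed.

Lemma actw_wf w x : wfX x -> wfX (actw w x).
Proof. by elim: w => [|l w IH] //= hx; apply: act_letter_wf; apply: IH. Qed.

Lemma actw_s w x : all (fun l : letter => l.1) w -> wfX x -> actw w x = actA (piL w) x.
Proof.
elim: w => [|l w IH] /= hw hx; first by rewrite actA_one.
case/andP: hw => hl hw; rewrite IH // /act_letter hl actA_comp //; first exact: gen_elems.
exact: piN_elems.
Qed.

Lemma actw_t w x : all (fun l : letter => ~~ l.1) w -> wfX x -> actw w x = (actP (piL w) x.1, x.2).
Proof.
case: x => p0 tl.
elim: w => [|l w IH] /= hw hx; first by rewrite actP_one //; case/andP: hx.
case/andP: hw => hl hw; rewrite IH // /act_letter (negbTE hl) /= actP_comp //; first exact: gen_elems.
- exact: piN_elems.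
- by case/andP: hx.
Qed.

Lemma carryD_flip e bs d : carryD e (map flipb bs) d = (map flipb (carryD e bs d).1, (carryD e bs d).2).
Proof. by elim: bs e => [|t r IH] e //=; rewrite IH. Qed.

Lemma actP_g4 p : wfP p -> actP g4 p = carryD g4 p.1 p.2.
Proof.
case: p => bs d /andP[/= hbs hd]; rewrite /actP /=.
case: bs hbs => [|[[] b] r] hbs /=.
- by rewrite mulp1 // split_C.
- by rewrite mulp1 // split_C.
have hb : nt b by case/andP: hbs => _ /andP[].
rewrite /front (negbTE (split_nt _ hb)) //.
Qed.

Lemma actA_g4 x : wfX x -> actA g4 x = (swapP g4 x.1, carryX g4 x.2).
Proof.
move=> hx; rewrite /actA; case: ifP => [/andP[/eqP h1 /eqP h2]|/negbT hs].
  by case: x hx h1 h2 => p0 tl /= _ -> ->.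
case: x hx hs => p0 tl /andP[/= hp ht]; rewrite /special /hX /pX /rX /=.
case: eqP => [-> /= |/eqP hne _].
  case: tl ht => [|t r] //= /andP[/andP[/andP[h1 _] _] _] _.
  by rewrite /frontX (negbTE (split_nt _ h1)).
by rewrite mulp1 // split_C.
Qed.

Definition Tg4 (x : Xt) : Xt := (actP g4 x.1, x.2).

Lemma Tg4_wf x : wfX x -> wfX (Tg4 x).
Proof. by case/andP=> h1 h2; rewrite /wfX /= h2 andbT actP_wf. Qed.

Lemma comm_g4 x : wfX x -> actA g4 (Tg4 x) = Tg4 (actA g4 x).
Proof.
move=> hx; have hx' := Tg4_wf hx.
rewrite (actA_g4 hx') (actA_g4 hx) /Tg4 /=.
case/andP: hx => hp _.
rewrite (actP_g4 hp) actP_g4; last exact: swapP_wf.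
by rewrite /swapP g4_neq /= carryD_flip.
Qed.

Lemma s4t4_trivial x : wfX x -> actw [:: (true, idx3); (false, idx3); (true, idx3); (false, idx3)] x = x.
Proof.
move=> hx.
have E : forall y, act_letter (false, idx3) y = Tg4 y by [].
have E' : forall y, act_letter (true, idx3) y = actA g4 y by [].
rewrite /actw /= !E !E'.
have hT := Tg4_wf hx.
have hg : g4 \in elems by exact: gen_elems.
rewrite (comm_g4 (actA_wf hg hT)) (actA_comp hg hg hT) g4g4 (actA_one hT).
case/andP: hx => hp _; rewrite /Tg4 /= actP_comp ?gen_elems // g4g4 actP_one //.
by case: x {hT hp}.
Qed.

Lemma rel_const b r x : (forall l, l \in r -> l.1 = b) -> piL r = one -> wfX x -> actw r x = x.
Proof.
move=> hb hp hx; case: b hb => hb.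
  rewrite actw_s // ?hp ?actA_one //.
  by apply/allP => l /hb.
rewrite actw_t // ?hp; last by apply/allP => l /hb ->.
by case: x hx => p0 tl /andP[/= /actP_one -> _].
Qed.

Lemma piL_inv b (i : 'I_4) : piL [:: (b, i); (b, i)] = one.
Proof. by case: i => [[|[|[|[|n]]]] hn] //; vm_compute. Qed.
Lemma piL_braid b (i j : 'I_4) : nat_of_ord j = (nat_of_ord i).+1 ->
  piL (flatten (nseq 3 [:: (b, i); (b, j)])) = one.
Proof.
case: i => [[|[|[|[|n]]]] hn] //; case: j => [[|[|[|[|m]]]] hm] //= _; vm_compute; reflexivity.
Qed.
Lemma piL_comm b (i j : 'I_4) : ((i.+2 <= j) || (j.+2 <= i))%N ->
  piL [:: (b, i); (b, j); (b, i); (b, j)] = one.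
Proof.
case: i => [[|[|[|[|n]]]] hn] //; case: j => [[|[|[|[|m]]]] hm] //= _; vm_compute; reflexivity.
Qed.

Lemma rel_trivial r x : relator r -> wfX x -> actw r x = x.
Proof.
case=> [[b i]|b i j hij|b i j hij|] hx.
- apply: (@rel_const b) => //; last exact: piL_inv.
  by move=> l; rewrite !inE => /orP[]/eqP->.
- apply: (@rel_const b) => //; last exact: piL_braid.
  move=> l; rewrite /= !inE; do ! [case/orP=> [/eqP -> //|]]; by move/eqP ->.
- apply: (@rel_const b) => //; last exact: piL_comm.
  by move=> l; rewrite !inE => /or4P[]/eqP->.
- exact: s4t4_trivial.
Qed.

Lemma weq_act u v : weq u v -> forall x, wfX x -> actw u x = actw v x.
Proof.
elim=> {u v} [w|u v _ IH|u v w _ IH1 _ IH2|u r v hr] x hx //.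
- by rewrite IH.
- by rewrite IH1 // IH2.
- by rewrite !actw_cat (rel_trivial hr (actw_wf v hx)).
Qed.

Add Parametric Relation : word weq reflexivity proved by (fun w => @weq_refl w)
  symmetry proved by (fun u v => @weq_sym u v) transitivity proved by (fun u v w => @weq_trans u v w)
  as weq_setoid.
Add Parametric Morphism : (@cat letter) with signature weq ==> weq ==> weq as cat_mor.
Proof. move=> x y h x' y' h'; exact: weq_cat. Qed.
Add Parametric Morphism l : (cons l) with signature weq ==> weq as cons_mor.
Proof. move=> x y h; exact: weq_cons. Qed.

#[local] Hint Resolve weq_refl : core.

Definition s4l : letter := (true, idx3).
Definition wordS p := mkw true (canonN p).
Definition wordT p := mkw false (canonN p).
Definition piece (t : bool * pm) : word := if t.1 then s4l :: wordT t.2 ++ [:: s4l] else wordT t.2.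
Definition repBs (bs : seq (bool * pm)) : word := flatten (map piece bs).
Definition repP (p : Pnf) : word := repBs p.1 ++ wordT p.2.
Definition repTl (tl : seq (pm * Pnf)) : word := flatten [seq wordS t.1 ++ repP t.2 | t <- tl].
Definition repX (x : Xt) : word := repP x.1 ++ repTl x.2.

Lemma canon_mul b x y : x \in elems -> y \in elems ->
  weq (mkw b (canonN x) ++ mkw b (canonN y)) (mkw b (canonN (mul x y))).
Proof.
move=> hx hy; rewrite -mkw_cat.
have h4 : forall q, q \in elems -> all (fun k => k < 4) (canonN q).
  by move=> q hq; rewrite canonN_E; have /allP := canon_lt4_check; apply.
have hc : all (fun k => k < 4) (canonN x ++ canonN y).
  by rewrite all_cat (h4 x hx) (h4 y hy).
apply: (weq_trans (canon_lemmaN b hc)).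
have E : forall q, q \in elems -> piN (canonN q) = q by move=> q hq; rewrite canonN_E piN_canon.
rewrite piN_cat (E x hx) (E y hy); exact: weq_refl.
Qed.

Lemma split_word b z : z \in elems ->
  weq (mkw b (canonN z)) (mkw b (canonN (split z).1) ++ mkw b (canonN (split z).2)).
Proof.
move=> hz; case: (split_spec hz) => h1 h2 h3.
rewrite (canon_mul b (isLT_elems h1) (isC_elems h2)) h3; exact: weq_refl.
Qed.

Lemma canon_one : canonN one = [::]. Proof. by rewrite canonN_E; vm_compute. Qed.
Lemma canon_g4 : canonN g4 = [:: 3]. Proof. by rewrite canonN_E; vm_compute. Qed.
Lemma mk3 b : mk b 3 = (b, idx3).
Proof. by rewrite /mk; congr pair; apply: val_inj; rewrite /= inordK. Qed.
Lemma wordT_one : wordT one = [::]. Proof. by rewrite /wordT canon_one. Qed.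
Lemma wordS_one : wordS one = [::]. Proof. by rewrite /wordS canon_one. Qed.
Lemma wordT_g4 : wordT g4 = [:: (false, idx3)]. Proof. by rewrite /wordT canon_g4 /= mk3. Qed.
Lemma wordS_g4 : wordS g4 = [:: s4l]. Proof. by rewrite /wordS canon_g4 /= mk3. Qed.

Lemma wordT_s4 c : isC c -> weq (wordT c ++ [:: s4l]) (s4l :: wordT c).
Proof.
case/isC_cases=> ->; first by rewrite wordT_one.
rewrite wordT_g4; exact: weq_s4t4.
Qed.

Lemma carryD_word e bs d : isC e -> all (fun t => nt t.2) bs -> isC d ->
  weq (wordT e ++ repBs bs ++ wordT d) (repP (carryD e bs d)).
Proof.
elim: bs e => [|t r IH] e he.
  move=> _ hd; rewrite /repP /= canon_mul //; exact: isC_elems.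
case/andP=> ht hr hd.
have hte : t.2 \in elems by exact: isLT_elems (nt_isLT ht).
have hz : mul e t.2 \in elems by apply: mul_elems => //; exact: isC_elems.
case: (split_spec hz) => hy he' _.
set y := (split (mul e t.2)).1; set e' := (split (mul e t.2)).2.
have E1 : weq (wordT e ++ wordT t.2) (wordT y ++ wordT e').
  by rewrite /wordT (canon_mul false (isC_elems he) hte) (split_word false hz).
have A : weq (wordT e ++ piece t) (piece (t.1, y) ++ wordT e').
  rewrite /piece /=; case: t.1; last exact: E1.
  have -> : wordT e ++ s4l :: wordT t.2 ++ [:: s4l] = (wordT e ++ [:: s4l]) ++ wordT t.2 ++ [:: s4l].
    by rewrite -catA.
  rewrite (wordT_s4 he).
  have -> : (s4l :: wordT e) ++ wordT t.2 ++ [:: s4l] = s4l :: ((wordT e ++ wordT t.2) ++ [:: s4l]).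
    by rewrite /= catA.
  rewrite E1.
  have -> : s4l :: ((wordT y ++ wordT e') ++ [:: s4l]) = s4l :: wordT y ++ (wordT e' ++ [:: s4l]).
    by rewrite -catA.
  by rewrite (wordT_s4 he') /= -catA.
rewrite /repBs /= -/(repBs r).
have -> : wordT e ++ (piece t ++ repBs r) ++ wordT d = (wordT e ++ piece t) ++ repBs r ++ wordT d.
  by rewrite !catA.
rewrite A -catA (IH e' he' hr hd).
by rewrite /repP /= /repBs /= -/(repBs _) -catA.
Qed.

Lemma repBs_hd bs : repBs bs = wordT (hd0 bs) ++ repBs (tl0 bs).
Proof. by case: bs => [|[[] b] r] //=; rewrite wordT_one. Qed.

Lemma actP_word b p : b \in elems -> wfP p -> weq (wordT b ++ repP p) (repP (actP b p)).
Proof.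
case: p => bs d hb /andP[/= hbs hd]; rewrite /actP /repP /= repBs_hd.
have [htl _] := wfBs_tl0 hbs.
have hh : hd0 bs \in elems by exact: isLT_elems (hd0_isLT hbs).
have hz : mul b (hd0 bs) \in elems by apply: mul_elems.
case: (split_spec hz) => hy he _.
have -> : wordT b ++ (wordT (hd0 bs) ++ repBs (tl0 bs)) ++ wordT d =
   (wordT b ++ wordT (hd0 bs)) ++ (repBs (tl0 bs) ++ wordT d) by rewrite !catA.
rewrite {1 2}/wordT (canon_mul false hb hh) (split_word false hz) -/(wordT _) -/(wordT _) -catA.
rewrite carryD_word //; last by case/andP: htl.
rewrite /front; case: eqP => [->|_]; first by rewrite wordT_one.
by rewrite /repP /= -catA.
Qed.

Lemma weq_cancel_r x w : weq (w ++ [:: x; x]) w.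
Proof. by move: (@weq_del w [:: x; x] [::] (rel_inv x)); rewrite !cats0. Qed.

Lemma s4_repBs bs : weq (s4l :: repBs bs) (repBs (map flipb bs) ++ [:: s4l]).
Proof.
elim: bs => [|t r IH] //=.
have A : weq (s4l :: piece t) (piece (flipb t) ++ [:: s4l]).
  rewrite /piece /flipb /=; case: t.1 => /=.
    by rewrite weq_cancel.
  by rewrite -catA /= weq_cancel_r.
rewrite /repBs /= -/(repBs r) -/(repBs (map flipb r)).
by rewrite -cat_cons A -catA /= IH catA.
Qed.

Lemma swap_word c p : isC c -> isC p.2 -> weq (wordS c ++ repP p) (repP (swapP c p) ++ wordS c).
Proof.
case/isC_cases=> ->; first by rewrite wordS_one swapP_one cats0.
case: p => bs d /= hd.
rewrite wordS_g4 /swapP g4_neq /repP /= -cat_cons s4_repBs -!catA /=.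
by rewrite -(wordT_s4 hd).
Qed.

Lemma carryX_word c tl : isC c -> wfT tl ->
  exists c', isC c' /\ weq (wordS c ++ repTl tl) (repTl (carryX c tl) ++ wordS c').
Proof.
elim: tl c => [|t r IH] c hc.
  by move=> _; exists c; split => //; rewrite /repTl /= cats0.
case/andP=> /andP[/andP[ht hp] hp1] hr.
have hte : t.1 \in elems by exact: isLT_elems (nt_isLT ht).
have hz : mul c t.1 \in elems by apply: mul_elems => //; exact: isC_elems.
case: (split_spec hz) => hy he _.
have [c' [hc' E]] := IH _ he hr.
exists c'; split => //.
set y := (split (mul c t.1)).1 in E *; set e := (split (mul c t.1)).2 in he E *.
have hp2 : isC t.2.2 by case/andP: hp.
have -> : wordS c ++ repTl (t :: r) = (wordS c ++ wordS t.1) ++ repP t.2 ++ repTl r.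
  by rewrite /repTl /= -!catA.
rewrite {1 2}/wordS (canon_mul true (isC_elems hc) hte) (split_word true hz) -/(wordS _) -/(wordS _).
have -> : (wordS y ++ wordS e) ++ repP t.2 ++ repTl r = wordS y ++ (wordS e ++ repP t.2) ++ repTl r.
  by rewrite !catA.
rewrite (swap_word he hp2).
have -> : wordS y ++ (repP (swapP e t.2) ++ wordS e) ++ repTl r =
    wordS y ++ repP (swapP e t.2) ++ (wordS e ++ repTl r) by rewrite !catA.
rewrite E.
by rewrite /repTl /= -!catA.
Qed.

Lemma repX_ns x : wfX x -> ~~ special x -> repX x = wordS (hX x) ++ repP (pX x) ++ repTl (rX x).
Proof.
case: x => p0 tl /andP[/= hp ht]; rewrite /special /hX /pX /rX /repX /=.
case: eqP => [-> /=|/eqP hne _]; last by rewrite wordS_one.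
case: tl ht => [|t r] //= _ _.
by rewrite /repP /= wordT_one /repTl /= -catA.
Qed.

Lemma actA_word a x : a \in elems -> wfX x ->
  exists u, s_word u /\ weq (wordS a ++ repX x) (repX (actA a x) ++ u).
Proof.
move=> ha hx; case hs: (special x).
  exists (wordS a); split; first by rewrite /s_word /wordS /mkw all_map; apply/allP.
  rewrite /actA hs.
  case: x hx hs => p0 tl _ /andP[/eqP /= -> /eqP ->].
  by rewrite /repX /repP /= wordT_one cats0.
have hs' : ~~ special x by rewrite hs.
have [h1 h2 h3 h4] := nonspecial_spec hx hs'.
have hz : mul a (hX x) \in elems by apply: mul_elems => //; exact: isLT_elems.
case: (split_spec hz) => hy hc _.
have [c' [hc' E]] := carryX_word hc h4.
exists (wordS c'); split; first by rewrite /s_word /wordS /mkw all_map; apply/allP.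
have hh : hX x \in elems by exact: isLT_elems.
have hP2 : isC (pX x).2 by case/andP: h2.
rewrite (repX_ns hx hs') (actA_ns a hs').
set y := (split (mul a (hX x))).1 in hy *; set c := (split (mul a (hX x))).2 in hc E *.
have -> : wordS a ++ wordS (hX x) ++ repP (pX x) ++ repTl (rX x) =
   (wordS a ++ wordS (hX x)) ++ repP (pX x) ++ repTl (rX x) by rewrite catA.
rewrite {1 2}/wordS (canon_mul true ha hh) (split_word true hz) -/(wordS _) -/(wordS _).
have -> : (wordS y ++ wordS c) ++ repP (pX x) ++ repTl (rX x) =
   wordS y ++ (wordS c ++ repP (pX x)) ++ repTl (rX x) by rewrite !catA.
rewrite (swap_word hc hP2).
have -> : wordS y ++ (repP (swapP c (pX x)) ++ wordS c) ++ repTl (rX x) =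
   wordS y ++ repP (swapP c (pX x)) ++ (wordS c ++ repTl (rX x)) by rewrite !catA.
rewrite E.
rewrite /frontX; case: eqP => [->|_]; first by rewrite wordS_one /repX -!catA.
by rewrite /repX /= /repP /= wordT_one /repTl /= -!catA.
Qed.

Definition x0 : Xt := (P1, [::]).
Lemma wf_x0 : wfX x0. Proof. by vm_compute. Qed.
Lemma repX_x0 : repX x0 = [::]. Proof. by rewrite /repX /repP /= wordT_one. Qed.

Lemma canon_gen (i : 'I_4) : canonN (gen i) = [:: nat_of_ord i].
Proof. rewrite canonN_E; by case: i => [[|[|[|[|n]]]] hn] //; vm_compute. Qed.

Lemma word_letter b (i : 'I_4) : [:: (b, i)] = mkw b (canonN (gen i)).
Proof. by rewrite canon_gen /= /mk inord_val. Qed.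

Lemma closure g : exists u, s_word u /\ weq g (repX (actw g x0) ++ u).
Proof.
elim: g => [|[b i] g [u [hu IH]]].
  by exists [::]; split => //; rewrite /= repX_x0; exact: weq_refl.
have hy := actw_wf g wf_x0.
set y := actw g x0 in hy IH *.
case: b.
  have [u' [hu' E]] := @actA_word (gen i) y (gen_elems _) hy.
  exists (u' ++ u); split; first by rewrite /s_word all_cat; apply/andP.
  apply: (weq_trans (weq_cons _ IH)).
  have -> : actw ((true, i) :: g) x0 = actA (gen i) y by [].
  rewrite -cat1s (word_letter true i) catA -/(wordS _) E -catA.
  exact: weq_refl.
exists u; split => //.
apply: (weq_trans (weq_cons _ IH)).
have -> : actw ((false, i) :: g) x0 = (actP (gen i) y.1, y.2) by [].
rewrite -cat1s (word_letter false i) catA -/(wordT _) /repX catA actP_word ?gen_elems //.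
by case/andP: hy.
Qed.

Lemma sgn_one : sgn one = false. Proof. by vm_compute. Qed.
Lemma sgn_piN ns : all (fun k => k < 4) ns -> sgn (piN ns) = odd (size ns).
Proof.
elim: ns => [|n ns IH]; first by vm_compute.
case/andP=> hn hns.
have /allP/(_ n) := sgn_check; rewrite mem_iota add0n => /(_ hn)/allP/(_ _ (piN_elems ns))/eqP ->.
by rewrite IH.
Qed.

Lemma fix_lemma a x : a \in elems -> a != one -> ~~ sgn a -> wfX x -> actA a x = x -> x = x0.
Proof.
move=> ha h1 hs hx; case hsp: (special x).
  by case: x hx hsp => p0 tl _ /andP[/eqP /= -> /eqP ->].
have hs' : ~~ special x by rewrite hsp.
have [k1 k2 k3 k4] := nonspecial_spec hx hs'.
have hz : mul a (hX x) \in elems by apply: mul_elems => //; exact: isLT_elems.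
case: (split_spec hz) => hy hc _.
rewrite (actA_ns a hs') => E.
case: (frontX_spec hy hc k2 k3 k4) => _ _ Eh _ _.
have hfix := Fix_check; rewrite -split_E in hfix.
have /orP[/orP[H|H]|H] := allP hfix a ha.
- by rewrite H in h1.
- by rewrite H in hs.
have := allP H (hX x) (isLT_elems k1).
case/andP: k1 => _ ->; rewrite /= -{2}E Eh.
by rewrite eqxx.
Qed.

Unset Implicit Arguments.
Theorem lemma4p24 (a : word) :
  in_A5s a -> involution a ->
  forall g : word, in_centralizer a g -> in_S5s g.
Proof.
move=> [w [hsw [hev haw]]] [_ hne] g hc.
set ns := map (fun l : letter => nat_of_ord l.2) w.
have hw : w = mkw true ns.
  rewrite /ns /mkw -map_comp; elim: w hsw {hev haw ns} => [|[b i] w IH] //= /andP[/= -> hs].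
  by rewrite -IH // /mk inord_val.
have hns : all (fun k => k < 4) ns by rewrite /ns all_map; apply/allP => l _ /=.
set p := piN ns.
have hp : p \in elems by exact: piN_elems.
have hp1 : p != one.
  apply/eqP => E; apply: hne; apply: weq_trans haw _.
  rewrite hw; apply: weq_trans (canon_lemmaN true hns) _.
  by rewrite -/p E canon_one.
have hsg : ~~ sgn p by rewrite /p sgn_piN // /ns size_map.
have hacta : forall y, wfX y -> actw a y = actA p y.
  move=> y hy; rewrite (weq_act haw hy) actw_s //.
have E := weq_act hc wf_x0.
rewrite !actw_cat (hacta _ wf_x0) (hacta _ (actw_wf g wf_x0)) in E.
have Ex0 : actA p x0 = x0 by rewrite /actA /=.
rewrite Ex0 in E.
have Fx := fix_lemma hp hp1 hsg (actw_wf g wf_x0) (esym E).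
have [u [hu Eu]] := closure g.
exists u; split => //.
by rewrite Fx repX_x0 in Eu.
Qed.
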